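(* Let $b>0$, $p_0>0$, and let $(p_\ell)_{\ell\ge1}$ be a probability distribution on $\{1,2,\dots\}$ with $p_\ell\ell^2\to p_0$ as $\ell\to\infty$. Let $k,j\in\mathbb N$ with $k\ge j\ge2$ and let $c_0>0$. For $K>1$ and $n\ge c_0/2$ define \[R_j(K,n)=K\log(K)\,nb\sum_{\ell\ge j-1}p_\ell\,\frac{\binom{K\log(K)n+\ell-k}{\ell+1-j}}{\binom{K\log(K)n+\ell}{\ell+1}},\qquad R_j=\int_0^1u^j(1-u)^{k-j}\frac{bp_0}{u^2}\,du.\] Then $R_j(K,n)\to R_j$ as $K\to\infty$, uniformly in $n\ge c_0/2$.
   Context: Binomial coefficients with non-integer upper argument are understood in the generalized sense $\binom{x}{r}=\frac{x(x-1)\cdots(x-r+1)}{r!}$ (equivalently via Gamma functions), for real $x$ and nonnegative integer $r$. *)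

(* Defs.v *)
From Stdlib Require Import Reals Lra Lia.
From Coquelicot Require Import Coquelicot.
Open Scope R_scope.

Fixpoint falling (x : R) (r : nat) : R :=
  match r with
  | O => 1
  | S r' => falling x r' * (x - INR r')
  end.

Definition gbinom (x : R) (r : nat) : R := falling x r / INR (Factorial.fact r).

Definition Rj_term (b : R) (p : nat -> R) (k j : nat) (K n : R) (l : nat) : R :=
  p l * gbinom (K * ln K * n + INR l - INR k) (l + 1 - j)
      / gbinom (K * ln K * n + INR l) (l + 1).

Definition RjKn (b : R) (p : nat -> R) (k j : nat) (K n : R) : R :=
  K * ln K * n * b * Series (fun m => Rj_term b p k j K n (j - 1 + m)%nat).

Definition Rj_lim (b p0 : R) (k j : nat) : R :=
  RInt (fun u => u ^ j * (1 - u) ^ (k - j) * (b * p0 / u ^ 2)) 0 1.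

(* Main.v *)
Require Import Defs.
From Stdlib Require Import Reals Lra Lia.
From Coquelicot Require Import Coquelicot.
Open Scope R_scope.

Lemma falling_S a p : falling a (S p) = falling a p * (a - INR p).
Proof. reflexivity. Qed.

Lemma falling_first a p : falling a (S p) = a * falling (a - 1) p.
Proof.
  revert a; induction p; intros a.
  - simpl. ring.
  - rewrite falling_S, IHp, falling_S, S_INR. ring.
Qed.

Lemma falling_add a p q : falling a (p + q) = falling a p * falling (a - INR p) q.
Proof.
  induction q.
  - rewrite Nat.add_0_r; simpl; ring.
  - rewrite Nat.add_succ_r, !falling_S, IHq, plus_INR. ring.
Qed.

Lemma falling_nonneg a p : INR p - 1 <= a -> 0 <= falling a p.
Proof.
  induction p; intros H.
  - simpl; lra.
  - rewrite falling_S. rewrite S_INR in H. apply Rmult_le_pos. apply IHp; lra. lra.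
Qed.

Lemma falling_pos a p : INR p - 1 < a -> 0 < falling a p.
Proof.
  induction p; intros H.
  - simpl; lra.
  - rewrite falling_S. rewrite S_INR in H. apply Rmult_lt_0_compat. apply IHp; lra. lra.
Qed.

Lemma falling_lb a p : 0 <= a - INR p + 1 -> (a - INR p + 1) ^ p <= falling a p.
Proof.
  induction p; intros H.
  - simpl; lra.
  - rewrite falling_S, <- tech_pow_Rmult. rewrite S_INR in *.
    assert (H1 : (a - INR p) ^ p <= (a - INR p + 1) ^ p).
    { apply pow_incr; lra. }
    assert (H2 : (a - INR p + 1) ^ p <= falling a p) by (apply IHp; lra).
    replace (a - (INR p + 1) + 1) with (a - INR p) by ring.
    rewrite Rmult_comm. apply Rmult_le_compat_r; lra.
Qed.

Lemma falling_mono a a' p : INR p - 1 <= a -> a <= a' -> falling a p <= falling a' p.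
Proof.
  induction p; intros H H'.
  - simpl; lra.
  - rewrite !falling_S. rewrite S_INR in H. apply Rmult_le_compat.
    + apply falling_nonneg; lra.
    + lra.
    + apply IHp; lra.
    + lra.
Qed.

Lemma falling_nat_zero n s : (n < s)%nat -> falling (INR n) s = 0.
Proof.
  induction s; intros H; [lia|]. rewrite falling_S.
  destruct (Nat.eq_dec n s) as [->|Hne].
  - ring.
  - rewrite IHs by lia. ring.
Qed.

Lemma falling_nat_bd n s : 0 <= falling (INR n) s <= INR n ^ s.
Proof.
  induction s.
  - simpl; lra.
  - rewrite falling_S, <- tech_pow_Rmult. destruct (Compare_dec.le_lt_dec s n) as [Hle|Hlt].
    + assert (INR s <= INR n) by (apply le_INR; lia).
      assert (0 <= INR s) by apply pos_INR.
      split.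
      * apply Rmult_le_pos; lra.
      * rewrite Rmult_comm. apply Rmult_le_compat; lra.
    + rewrite falling_nat_zero by lia. split; [lra|].
      rewrite Rmult_0_l. apply Rmult_le_pos; [apply pos_INR|apply pow_le, pos_INR].
Qed.

Lemma falling_nat_fact n : falling (INR n) n = INR (Factorial.fact n).
Proof.
  induction n.
  - reflexivity.
  - rewrite falling_first. replace (INR (S n) - 1) with (INR n) by (rewrite S_INR; ring).
    rewrite IHn. change (Factorial.fact (S n)) with (S n * Factorial.fact n)%nat. rewrite mult_INR. ring.
Qed.

Lemma falling_zero_S r : falling 0 (S r) = 0.
Proof. rewrite falling_first. ring. Qed.

Lemma falling_diff a r : falling (a + 1) (S r) - falling a (S r) = INR (S r) * falling a r.
Proof.
  rewrite falling_first. replace (a + 1 - 1) with a by ring. rewrite falling_S, S_INR. ring.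
Qed.

Fixpoint G (y : R) (r M i : nat) : R :=
  match r with
  | O => / (INR (M - 1) * falling (y + INR i - 1) (M - 1))
  | S r' => (falling (INR i) (S r') / falling (y + INR i - 1) (M - 1)
             + INR (S r') * G y r' (M - 1) i) / INR (M - 1)
  end.

Fixpoint cc (r M : nat) : R :=
  match r with
  | O => / INR (M - 1)
  | S r' => INR (S r') / INR (M - 1) * cc r' (M - 1)
  end.

Lemma g_diff y i M' : INR M' + 1 <= y ->
  / falling (y + INR i - 1) M' - / falling (y + INR i) M'
  = INR M' / falling (y + INR i) (S M').
Proof.
  intros Hy. assert (Hi := pos_INR i). assert (HM0 := pos_INR M').
  assert (HA : 0 < falling (y + INR i - 1) M') by (apply falling_pos; lra).
  assert (HC : 0 < falling (y + INR i) M') by (apply falling_pos; lra).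
  pose proof (falling_first (y + INR i) M') as E1.
  pose proof (falling_S (y + INR i) M') as E2.
  assert (HF : 0 < falling (y + INR i) (S M')) by (apply falling_pos; rewrite S_INR; lra).
  assert (EA : falling (y + INR i - 1) M' = falling (y + INR i) (S M') / (y + INR i)).
  { rewrite E1. field. lra. }
  assert (EC : falling (y + INR i) M' = falling (y + INR i) (S M') / (y + INR i - INR M')).
  { rewrite E2. field. lra. }
  rewrite EA, EC. field. repeat split; lra.
Qed.

Lemma G_tel y : forall r M, (r + 2 <= M)%nat -> INR M <= y -> forall i,
  G y r M i - G y r M (S i) = falling (INR i) r / falling (y + INR i) M.
Proof.
  induction r; intros M HM Hy i.
  - destruct M as [|M']; [lia|].
    cbn [G]. replace (S M' - 1)%nat with M' by lia.
    rewrite S_INR in Hy. assert (Hi := pos_INR i).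
    assert (HM' : 1 <= INR M') by (apply (le_INR 1); lia).
    replace (y + INR (S i) - 1) with (y + INR i) by (rewrite S_INR; ring).
    assert (HA : 0 < falling (y + INR i - 1) M') by (apply falling_pos; lra).
    assert (HC : 0 < falling (y + INR i) M') by (apply falling_pos; lra).
    assert (HF : 0 < falling (y + INR i) (S M')) by (apply falling_pos; rewrite S_INR; lra).
    pose proof (g_diff y i M' Hy) as E.
    rewrite !Rinv_mult. simpl falling at 3.
    replace (/ INR M' * / falling (y + INR i - 1) M' - / INR M' * / falling (y + INR i) M')
      with (/ INR M' * (/ falling (y + INR i - 1) M' - / falling (y + INR i) M')) by ring.
    rewrite E. field. split; lra.
  - destruct M as [|M']; [lia|].
    cbn [G]. replace (S M' - 1)%nat with M' by lia.
    rewrite S_INR in Hy. assert (Hi := pos_INR i).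
    assert (HM' : 1 <= INR M') by (apply (le_INR 1); lia).
    replace (y + INR (S i) - 1) with (y + INR i) by (rewrite S_INR; ring).
    assert (HA : 0 < falling (y + INR i - 1) M') by (apply falling_pos; lra).
    assert (HC : 0 < falling (y + INR i) M') by (apply falling_pos; lra).
    assert (HF : 0 < falling (y + INR i) (S M')) by (apply falling_pos; rewrite S_INR; lra).
    pose proof (g_diff y i M' Hy) as E.
    pose proof (IHr M' ltac:(lia) ltac:(lra) i) as IH.
    pose proof (falling_diff (INR i) r) as D. rewrite <- S_INR in D.
    assert (Ef : falling (INR (S i)) (S r) = falling (INR i) (S r) + INR (S r) * falling (INR i) r) by lra.
    rewrite Ef.
    transitivity ((falling (INR i) (S r) * (/ falling (y + INR i - 1) M' - / falling (y + INR i) M')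
       + INR (S r) * (G y r M' i - G y r M' (S i)) - INR (S r) * falling (INR i) r / falling (y + INR i) M') / INR M').
    + field. repeat split; lra.
    + rewrite E, IH. field. repeat split; lra.
Qed.

Lemma G_zero y r M : G y r M 0 = cc r M / falling (y - 1) (M - r - 1).
Proof.
  revert M; induction r; intros M.
  - cbn [G cc]. replace (y + INR 0 - 1) with (y - 1) by (simpl; ring).
    replace (M - 0 - 1)%nat with (M - 1)%nat by lia.
    rewrite Rinv_mult. unfold Rdiv. ring.
  - cbn [G cc]. rewrite IHr. replace (M - 1 - r - 1)%nat with (M - S r - 1)%nat by lia.
    change (INR 0) with 0. rewrite falling_zero_S. unfold Rdiv. ring.
Qed.

Lemma lim_inv_n1 : is_lim_seq (fun n => / (INR n + 1)) 0.
Proof.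
  assert (H : is_lim_seq (fun n => INR n + 1) p_infty).
  { apply is_lim_seq_ext with (fun n => INR (S n)). intros n; apply S_INR.
    apply (is_lim_seq_incr_1 INR p_infty). apply is_lim_seq_INR. }
  pose proof (is_lim_seq_inv _ _ H ltac:(discriminate)) as H2. exact H2.
Qed.

Lemma ratio_bd y n s P : (s < P)%nat -> INR P + 1 <= y ->
  0 <= falling (INR n) s / falling (y + INR n - 1) P <= / (INR n + 1).
Proof.
  intros HsP Hy. assert (Hn := pos_INR n).
  assert (HF : 0 < falling (y + INR n - 1) P) by (apply falling_pos; lra).
  destruct (falling_nat_bd n s) as [H0 H1].
  split. { apply Rmult_le_pos; [lra|]. apply Rlt_le, Rinv_0_lt_compat; lra. }
  assert (HL : (INR n + 1) ^ P <= falling (y + INR n - 1) P).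
  { apply Rle_trans with ((y + INR n - 1 - INR P + 1) ^ P).
    - apply pow_incr; lra.
    - apply falling_lb; lra. }
  assert (HP : (INR n + 1) ^ (S s) <= (INR n + 1) ^ P).
  { apply Rle_pow; [lra|lia]. }
  assert (Hs : INR n ^ s <= (INR n + 1) ^ s) by (apply pow_incr; lra).
  assert (Hpos : 0 < (INR n + 1) ^ s) by (apply pow_lt; lra).
  simpl in HP.
  apply Rmult_le_reg_r with (falling (y + INR n - 1) P); [lra|].
  unfold Rdiv. rewrite Rmult_assoc, Rinv_l by lra. rewrite Rmult_1_r.
  apply Rle_trans with ((INR n + 1) ^ s); [lra|].
  apply Rmult_le_reg_l with (INR n + 1); [lra|].
  rewrite <- Rmult_assoc, Rinv_r, Rmult_1_l by lra. lra.
Qed.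

Lemma G_lim y : forall r M, (r + 2 <= M)%nat -> INR M <= y ->
  is_lim_seq (fun i => G y r M i) 0.
Proof.
  induction r; intros M HM Hy.
  - apply is_lim_seq_le_le with (fun _ => 0) (fun i => / (INR i + 1)).
    + intros i. cbn [G].
      assert (HM1 : 1 <= INR (M - 1)) by (apply (le_INR 1); lia).
      assert (E : INR (M - 1) = INR M - 1) by (rewrite minus_INR by lia; simpl; ring).
      destruct (ratio_bd y i 0 (M - 1) ltac:(lia) ltac:(lra)) as [B0 B1].
      change (falling (INR i) 0) with 1 in B0, B1. unfold Rdiv in B0, B1. rewrite Rmult_1_l in B0, B1.
      rewrite Rinv_mult. split.
      * apply Rmult_le_pos; [|lra]. apply Rlt_le, Rinv_0_lt_compat; lra.
      * apply Rle_trans with (/ falling (y + INR i - 1) (M - 1)); [|lra].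
        rewrite <- (Rmult_1_l (/ falling _ _)) at 2. apply Rmult_le_compat_r; [lra|].
        rewrite <- Rinv_1. apply Rinv_le_contravar; lra.
    + apply is_lim_seq_const.
    + apply lim_inv_n1.
  - assert (HM1 : 1 <= INR (M - 1)) by (apply (le_INR 1); lia).
    assert (E : INR (M - 1) = INR M - 1) by (rewrite minus_INR by lia; simpl; ring).
    apply is_lim_seq_ext with (fun i => / INR (M - 1) *
       (falling (INR i) (S r) / falling (y + INR i - 1) (M - 1) + INR (S r) * G y r (M - 1) i)).
    { intros i. cbn [G]. unfold Rdiv at 2. ring. }
    replace 0 with (/ INR (M - 1) * (0 + INR (S r) * 0)) by ring.
    apply (is_lim_seq_scal_l _ _ (Finite _)).
    apply is_lim_seq_plus'.
    + apply is_lim_seq_le_le with (fun _ => 0) (fun i => / (INR i + 1)).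
      * intros i. apply ratio_bd; [lia|lra].
      * apply is_lim_seq_const.
      * apply lim_inv_n1.
    + apply (is_lim_seq_scal_l _ _ (Finite _)). apply IHr; [lia|lra].
Qed.

Lemma G_const y r M : (r + 2 <= M)%nat -> INR M <= y ->
  forall i, (i <= r)%nat -> G y r M i = G y r M 0.
Proof.
  intros HM Hy i. induction i; intros Hi; [reflexivity|].
  rewrite <- IHi by lia.
  pose proof (G_tel y r M HM Hy i) as T. rewrite falling_nat_zero in T by lia. lra.
Qed.

Lemma series_id r M w : (r + 2 <= M)%nat -> INR M + INR r <= w ->
  is_series (fun m => falling (INR m + INR r) r / falling (w + INR m) M)
            (cc r M / falling (w - INR r - 1) (M - r - 1)).
Proof.
  intros HM Hw. set (y := w - INR r).
  assert (Hy : INR M <= y) by (unfold y; lra).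
  assert (PS : forall n, sum_n (fun m => falling (INR m + INR r) r / falling (w + INR m) M) n
                 = G y r M r - G y r M (S n + r)).
  { induction n.
    - rewrite sum_O. pose proof (G_tel y r M HM Hy r) as T. replace (S 0 + r)%nat with (S r) by lia. rewrite T.
      replace (y + INR r) with (w + INR 0) by (unfold y; simpl; ring).
      replace (INR 0 + INR r) with (INR r) by (simpl; ring). reflexivity.
    - rewrite sum_Sn. change plus with Rplus. rewrite IHn.
      pose proof (G_tel y r M HM Hy (S n + r)) as T.
      replace (INR (S n) + INR r) with (INR (S n + r)) by (rewrite plus_INR; ring).
      replace (w + INR (S n)) with (y + INR (S n + r)) by (unfold y; rewrite plus_INR; ring).
      rewrite <- T. replace (S (S n) + r)%nat with (S (S n + r)) by lia. lra. }
  change (is_lim_seq (sum_n (fun m => falling (INR m + INR r) r / falling (w + INR m) M))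
            (cc r M / falling (w - INR r - 1) (M - r - 1))).
  apply is_lim_seq_ext with (fun n => G y r M r - G y r M (n + S r)).
  { intros n. rewrite PS. do 2 f_equal. lia. }
  replace (cc r M / falling (w - INR r - 1) (M - r - 1)) with (G y r M r - 0).
  2:{ rewrite G_const by (auto; lia). rewrite G_zero, Rminus_0_r. replace (w - INR r - 1) with (y - 1) by (unfold y; ring). reflexivity. }
  apply is_lim_seq_minus'. apply is_lim_seq_const.
  apply (is_lim_seq_incr_n (fun i => G y r M i) (S r) 0). apply G_lim; auto.
Qed.

Lemma minus_R (a b : R) : minus a b = a - b.
Proof. reflexivity. Qed.
Lemma scal_R (a b : R) : scal a b = a * b.
Proof. reflexivity. Qed.

Ltac toR := match goal with |- ?a = ?b => change (@eq R a b) end.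

Lemma beta_int : forall r q, is_RInt (fun u => u ^ r * (1 - u) ^ q) 0 1 (cc r (r + q + 2)).
Proof.
  induction r; intros q.
  - assert (Hq : 0 < INR (S q)) by (apply lt_0_INR; lia).
    replace (cc 0 (0 + q + 2)) with (minus ((fun u => - (1 - u) ^ (S q) / INR (S q)) 1)
                                          ((fun u => - (1 - u) ^ (S q) / INR (S q)) 0)).
    2:{ rewrite minus_R. toR. cbn [cc]. replace (0 + q + 2 - 1)%nat with (S q) by lia.
        replace (1 - 1) with 0 by ring. replace (1 - 0) with 1 by ring.
        rewrite pow1, pow_i by lia. field. lra. }
    apply (is_RInt_derive (fun u => - (1 - u) ^ (S q) / INR (S q)) (fun u => u ^ 0 * (1 - u) ^ q)).
    + intros x _. remember (INR (S q)) as c. auto_derive. auto. change (match q with 0%nat => 1 | S _ => INR q + 1 end) with (INR (S q)). rewrite <- Heqc. toR. replace (1 + - x) with (1 - x) by ring. field. lra.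
    + intros x _. apply (ex_derive_continuous (K:=R_AbsRing) (V:=R_NormedModule)). auto_derive. auto.
  - set (F := fun u => u ^ (S r) * (1 - u) ^ (S q)).
    set (D := fun u => INR (S r) * (u ^ r * (1 - u) ^ (S q)) - INR (S q) * (u ^ (S r) * (1 - u) ^ q)).
    assert (HD : is_RInt D 0 1 (minus (F 1) (F 0))).
    { apply (is_RInt_derive F D).
      + intros x _. unfold F, D. auto_derive. auto. simpl pred. toR.
        change (match r with 0%nat => 1 | S _ => INR r + 1 end) with (INR (S r)).
        change (match q with 0%nat => 1 | S _ => INR q + 1 end) with (INR (S q)).
        replace (1 + - x) with (1 - x) by ring. change (x ^ S r) with (x * x ^ r).
        change ((1 - x) ^ S q) with ((1 - x) * (1 - x) ^ q). ring.
      + intros x _. apply (ex_derive_continuous (K:=R_AbsRing) (V:=R_NormedModule)). unfold D. auto_derive. auto. }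
    assert (HF : minus (F 1) (F 0) = 0).
    { rewrite minus_R. toR. unfold F. replace (1 - 1) with 0 by ring. simpl. ring. }
    rewrite HF in HD.
    assert (HS : 0 < INR (S r) + INR q + 1) by (rewrite S_INR; pose proof (pos_INR r); pose proof (pos_INR q); lra).
    pose proof (is_RInt_scal _ _ _ (/ (INR (S r) + INR q + 1))
                  _ (is_RInt_minus _ _ _ _ _ _ (is_RInt_scal _ _ _ (INR (S r)) _ (IHr q)) HD)) as H.
    replace (cc (S r) (S r + q + 2)) with
      (scal (/ (INR (S r) + INR q + 1)) (minus (scal (INR (S r)) (cc r (r + q + 2))) 0)).
    2:{ transitivity (/ (INR (S r) + INR q + 1) * (INR (S r) * cc r (r + q + 2) - 0)); [reflexivity|]. cbn [cc].
        replace (S r + q + 2 - 1)%nat with (r + q + 2)%nat by lia.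
        replace (INR (r + q + 2)) with (INR (S r) + INR q + 1) by (rewrite !plus_INR, !S_INR; simpl; ring).
        toR. field. lra. }
    apply is_RInt_ext with (2 := H).
    intros x _. transitivity (/ (INR (S r) + INR q + 1) * (INR (S r) * (x ^ r * (1 - x) ^ q) - D x)); [reflexivity|]. unfold D. simpl pow.
    toR. rewrite !S_INR in *. field. lra.
Qed.

Definition rho (k j : nat) (x : R) (m : nat) : R :=
  gbinom (x + INR (j - 1 + m) - INR k) (j - 1 + m + 1 - j)
  / gbinom (x + INR (j - 1 + m)) (j - 1 + m + 1).

Lemma fact_split m j : INR (Factorial.fact (m + j)) = falling (INR (m + j)) j * INR (Factorial.fact m).
Proof.
  rewrite <- falling_nat_fact. replace (m + j)%nat with (j + m)%nat at 2 by lia.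
  rewrite falling_add. rewrite <- falling_nat_fact. f_equal. f_equal.
  rewrite plus_INR. ring.
Qed.

Lemma rho_form k j x m : (1 <= j)%nat -> (j <= k)%nat -> INR k <= x ->
  rho k j x m = falling (INR (m + j)) j * falling (x - 1) (k - j)
                / falling (x + INR j - 1 + INR m) k.
Proof.
  intros Hj Hjk Hx. unfold rho, gbinom.
  replace (j - 1 + m + 1 - j)%nat with m by lia.
  replace (j - 1 + m + 1)%nat with (m + j)%nat by lia.
  assert (EY : x + INR (j - 1 + m) = x + INR j - 1 + INR m).
  { rewrite plus_INR, minus_INR by lia. simpl. ring. }
  rewrite EY.
  set (Y := x + INR j - 1 + INR m).
  assert (Hm := pos_INR m). assert (Hk := pos_INR k).
  assert (HjR : 1 <= INR j) by (apply (le_INR 1); lia).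
  assert (E1 : falling Y (m + j) * falling (x - 1) (k - j) = falling Y k * falling (Y - INR k) m).
  { transitivity (falling Y ((m + j) + (k - j))).
    { rewrite (falling_add Y (m + j) (k - j)).
      replace (Y - INR (m + j)) with (x - 1) by (unfold Y; rewrite plus_INR; ring). reflexivity. }
    replace ((m + j) + (k - j))%nat with (k + m)%nat by lia. apply falling_add. }
  assert (E2 := fact_split m j).
  assert (HkjR : INR j <= INR k) by (apply le_INR; lia).
  assert (HYk : 0 < falling Y k) by (apply falling_pos; unfold Y; lra).
  assert (HYm : 0 < falling Y (m + j)) by (apply falling_pos; unfold Y; rewrite plus_INR; lra).
  assert (Hf : 0 < INR (Factorial.fact m)) by (apply lt_0_INR, Factorial.lt_O_fact).
  assert (EX : falling (Y - INR k) m = falling Y (m + j) * falling (x - 1) (k - j) / falling Y k).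
  { rewrite E1. field. lra. }
  assert (Hfmj : 0 < falling (INR (m + j)) j) by (apply falling_pos; rewrite plus_INR; lra).
  rewrite EX, E2. field. repeat split; lra.
Qed.

Lemma rho_nonneg k j x m : (1 <= j)%nat -> (j <= k)%nat -> INR k <= x -> 0 <= rho k j x m.
Proof.
  intros Hj Hjk Hx. rewrite rho_form by auto.
  assert (Hm := pos_INR m). assert (HjR : 1 <= INR j) by (apply (le_INR 1); lia).
  apply Rmult_le_pos. apply Rmult_le_pos.
  - apply falling_nat_bd.
  - apply falling_nonneg. rewrite minus_INR by lia. lra.
  - apply Rlt_le, Rinv_0_lt_compat, falling_pos. lra.
Qed.

Lemma rho_ub k j x m : (2 <= j)%nat -> (j <= k)%nat -> INR k + 1 <= x ->
  rho k j x m <= falling (INR (m + j)) j / x ^ 2.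
Proof.
  intros Hj Hjk Hx. rewrite rho_form by (auto; lia||lra).
  assert (Hm := pos_INR m). assert (HjR : 2 <= INR j) by (apply (le_INR 2); lia).
  assert (Hk := pos_INR k).
  set (Y := x + INR j - 1 + INR m).
  assert (EY : falling Y k = falling Y j * falling (Y - INR j) (k - j)).
  { rewrite <- falling_add. f_equal. lia. }
  assert (Hkj : INR (k - j) = INR k - INR j) by (apply minus_INR; lia).
  assert (H1 : 0 <= falling (x - 1) (k - j)) by (apply falling_nonneg; lra).
  assert (H2 : falling (x - 1) (k - j) <= falling (Y - INR j) (k - j)) by (apply falling_mono; unfold Y; lra).
  assert (H3 : x ^ 2 <= falling Y j).
  { apply Rle_trans with (x ^ j). apply Rle_pow; [lra|lia].
    apply Rle_trans with ((Y - INR j + 1) ^ j). apply pow_incr. unfold Y; lra.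
    apply falling_lb. unfold Y; lra. }
  assert (H4 : 0 < x ^ 2) by (apply pow_lt; lra).
  destruct (falling_nat_bd (m + j) j) as [H5 _].
  rewrite EY.
  assert (H6 : 0 < falling (Y - INR j) (k - j)) by (apply falling_pos; unfold Y; lra).
  unfold Rdiv. rewrite Rinv_mult.
  apply Rle_trans with (falling (INR (m + j)) j * / falling Y j).
  - rewrite Rmult_assoc. apply Rmult_le_compat_l; [lra|].
    rewrite <- Rmult_assoc, (Rmult_comm (falling (x - 1) (k - j))), Rmult_assoc.
    rewrite <- (Rmult_1_r (/ falling Y j)) at 2. apply Rmult_le_compat_l.
    + apply Rlt_le, Rinv_0_lt_compat; lra.
    + apply Rmult_le_reg_r with (falling (Y - INR j) (k - j)); [lra|].
      rewrite Rmult_assoc, Rinv_l by lra. lra.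
  - apply Rmult_le_compat_l; [lra|]. apply Rinv_le_contravar; lra.
Qed.

Definition wl (l : nat) : R := / (INR l * INR (S l)).

Lemma falling_two a : falling a 2 = a * (a - 1).
Proof. simpl. ring. Qed.

Lemma omega_sum j : (2 <= j)%nat -> is_series (fun m => wl (j - 1 + m)) (/ (INR j - 1)).
Proof.
  intros Hj. assert (HjR : 2 <= INR j) by (apply (le_INR 2); lia).
  pose proof (series_id 0 2 (INR j) ltac:(lia) ltac:(simpl; lra)) as H.
  replace (/ (INR j - 1)) with (cc 0 2 / falling (INR j - INR 0 - 1) (2 - 0 - 1)).
  2:{ simpl. field. lra. }
  apply is_series_ext with (2 := H). intros m.
  assert (Hm := pos_INR m).
  unfold wl. rewrite falling_two. change (falling (INR m + INR 0) 0) with 1.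
  rewrite S_INR, plus_INR, minus_INR by lia. simpl. field. split; lra.
Qed.

Lemma omega_rho_sum k j x : (2 <= j)%nat -> (j <= k)%nat -> INR k + 1 <= x ->
  is_series (fun m => wl (j - 1 + m) * rho k j x m) (cc (j - 2) k / x).
Proof.
  intros Hj Hjk Hx. assert (HjR : 2 <= INR j) by (apply (le_INR 2); lia).
  assert (Hk := pos_INR k).
  assert (Hj2 : INR (j - 2) = INR j - 2) by (rewrite minus_INR by lia; simpl; ring).
  pose proof (series_id (j - 2) k (x + INR j - 1) ltac:(lia) ltac:(lra)) as H.
  set (c := falling (x - 1) (k - j)).
  assert (Hc : 0 < c) by (apply falling_pos; rewrite minus_INR by lia; lra).
  pose proof (is_series_scal_l c _ _ H) as H2.
  replace (cc (j - 2) k / x) with (scal c (cc (j - 2) k / falling (x + INR j - 1 - INR (j - 2) - 1) (k - (j - 2) - 1))).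
  2:{ replace (k - (j - 2) - 1)%nat with (S (k - j)) by lia.
      replace (x + INR j - 1 - INR (j - 2) - 1) with x by lra.
      rewrite falling_first. fold c. change (scal c ?z) with (c * z). toR. field. lra. }
  apply is_series_ext with (2 := H2). intros m.
  change (scal c ?z) with (c * z).
  rewrite rho_form by (auto; lia || lra). fold c.
  assert (Hm := pos_INR m).
  assert (Ef : falling (INR (m + j)) j = INR (m + j) * (INR (m + j) - 1) * falling (INR m + INR (j - 2)) (j - 2)).
  { replace j with (2 + (j - 2))%nat at 2 by lia. rewrite falling_add, falling_two.
    f_equal. f_equal. rewrite plus_INR. simpl. lra. }
  rewrite Ef. unfold wl.
  replace (INR (j - 1 + m)) with (INR (m + j) - 1) by (rewrite !plus_INR, minus_INR by lia; simpl; ring).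
  replace (INR (S (j - 1 + m))) with (INR (m + j)) by (f_equal; lia).
  assert (HF : 0 < falling (x + INR j - 1 + INR m) k) by (apply falling_pos; lra).
  rewrite plus_INR. toR. field. repeat split; lra.
Qed.

Lemma sum_f_bound (f : nat -> R) N i : (forall i, 0 <= f i) -> (i <= N)%nat -> f i <= sum_f_R0 f N.
Proof.
  intros Hf Hi. induction N.
  - assert (i = 0%nat) by lia. subst. simpl. lra.
  - destruct (Nat.eq_dec i (S N)) as [->|Hne].
    + rewrite tech5. pose proof (cond_pos_sum f N) as HH.
      assert (0 <= sum_f_R0 f N).
      { clear -Hf. induction N; simpl; [apply Hf|]. specialize (Hf (S N)). lra. }
      lra.
    + rewrite tech5. specialize (Hf (S N)). assert (f i <= sum_f_R0 f N) by (apply IHN; lia). lra.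
Qed.

Lemma Rj_lim_val b p0 k j : (2 <= j)%nat -> (j <= k)%nat ->
  Rj_lim b p0 k j = b * p0 * cc (j - 2) k.
Proof.
  intros Hj Hjk. unfold Rj_lim. apply is_RInt_unique.
  pose proof (beta_int (j - 2) (k - j)) as H.
  replace (j - 2 + (k - j) + 2)%nat with k in H by lia.
  pose proof (is_RInt_scal _ _ _ (b * p0) _ H) as H2.
  apply is_RInt_ext with (2 := H2).
  rewrite Rmin_left, Rmax_right by lra. intros u Hu.
  change (scal (b * p0) ?z) with ((b * p0) * z). toR.
  replace (u ^ j) with (u ^ (j - 2) * u ^ 2) by (rewrite <- pow_add; f_equal; lia).
  field. lra.
Qed.

Lemma e_decay (p : nat -> R) p0 d : 0 < p0 -> 0 < d ->
  is_lim_seq (fun l => p l * INR l ^ 2) p0 ->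
  exists L, (1 <= L)%nat /\ forall l, (L <= l)%nat -> Rabs (p l - p0 * wl l) <= d * wl l.
Proof.
  intros Hp0 Hd Hlim.
  apply is_lim_seq_spec in Hlim.
  destruct (Hlim (mkposreal (d / 4) ltac:(lra))) as [N1 HN1].
  pose proof lim_inv_n1 as Hi. apply is_lim_seq_spec in Hi.
  assert (Hq : 0 < d / (4 * p0)) by (apply Rdiv_lt_0_compat; lra).
  destruct (Hi (mkposreal _ Hq)) as [N2 HN2].
  exists (Nat.max (Nat.max N1 N2) 1). split; [lia|].
  intros l Hl.
  specialize (HN1 l ltac:(lia)). specialize (HN2 l ltac:(lia)). cbn [pos] in HN1, HN2.
  assert (HlR : 1 <= INR l) by (apply (le_INR 1); lia).
  set (a := p l * INR l ^ 2 - p0) in *.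
  set (t := / (INR l + 1)) in *.
  assert (Ht : 0 < t) by (unfold t; apply Rinv_0_lt_compat; lra).
  rewrite Rminus_0_r, Rabs_right in HN2 by lra.
  assert (Hpt : p0 * t < d / 4).
  { apply Rmult_lt_reg_r with (/ p0). apply Rinv_0_lt_compat; lra.
    replace (p0 * t * / p0) with t by (field; lra).
    replace (d / 4 * / p0) with (d / (4 * p0)) by (field; lra). exact HN2. }
  assert (E : p l - p0 * wl l = (a + p0 * t) / INR l ^ 2).
  { unfold a, t, wl. rewrite S_INR. field. lra. }
  rewrite E. unfold Rdiv. rewrite Rabs_mult, (Rabs_right (/ INR l ^ 2)).
  2:{ apply Rle_ge, Rlt_le, Rinv_0_lt_compat, pow_lt; lra. }
  assert (Habs : Rabs (a + p0 * t) <= d / 2).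
  { apply Rle_trans with (Rabs a + Rabs (p0 * t)). apply Rabs_triang.
    rewrite (Rabs_right (p0 * t)) by (apply Rle_ge, Rmult_le_pos; lra).  lra. }
  apply Rle_trans with (d / 2 * / INR l ^ 2).
  { apply Rmult_le_compat_r; [|lra]. apply Rlt_le, Rinv_0_lt_compat, pow_lt; lra. }
  unfold wl. rewrite S_INR.
  assert (D : d * / (INR l * (INR l + 1)) - d / 2 * / INR l ^ 2
              = d * (INR l - 1) / (2 * INR l ^ 2 * (INR l + 1))) by (field; lra).
  assert (0 <= d * (INR l - 1) / (2 * INR l ^ 2 * (INR l + 1))).
  { apply Rmult_le_pos. apply Rmult_le_pos; lra.
    apply Rlt_le, Rinv_0_lt_compat. apply Rmult_lt_0_compat; [|lra].
    apply Rmult_lt_0_compat; [lra|]. apply pow_lt; lra. }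
  lra.
Qed.

Lemma main_bound (b p0 : R) (p : nat -> R) (k j : nat) (x d : R) (L : nat) :
  (2 <= j)%nat -> (j <= k)%nat -> 0 < d ->
  (forall l, (L <= l)%nat -> Rabs (p l - p0 * wl l) <= d * wl l) ->
  INR k + 1 <= x ->
  sum_f_R0 (fun l => Rabs (p l - p0 * wl l)) L * (INR L + INR j) ^ (j + 2) / d <= x ->
  forall m : nat, Rabs ((p (j - 1 + m)%nat - p0 * wl (j - 1 + m)%nat) * rho k j x m)
    <= d * (wl (j - 1 + m)%nat * rho k j x m) + d / x * wl (j - 1 + m)%nat.
Proof.
  intros Hj Hjk Hd HL Hx HX m.
  set (E := sum_f_R0 (fun l => Rabs (p l - p0 * wl l)) L) in *.
  set (Q := INR L + INR j) in *.
  set (l := (j - 1 + m)%nat).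
  set (e := p l - p0 * wl l).
  assert (Hk := pos_INR k). assert (Hm := pos_INR m).
  assert (HjR : 2 <= INR j) by (apply (le_INR 2); lia).
  assert (Hx0 : 0 < x) by lra.
  assert (Hrho := rho_nonneg k j x m ltac:(lia) Hjk ltac:(lra)).
  assert (HlR : 1 <= INR l) by (apply (le_INR 1); unfold l; lia).
  assert (Hwl : 0 < wl l).
  { unfold wl. apply Rinv_0_lt_compat, Rmult_lt_0_compat; [lra|]. rewrite S_INR; lra. }
  assert (Hsec : 0 <= d / x * wl l).
  { apply Rmult_le_pos; [apply Rlt_le, Rdiv_lt_0_compat; lra | lra]. }
  rewrite Rabs_mult, (Rabs_right (rho k j x m)) by lra.
  destruct (Compare_dec.le_lt_dec L l) as [HLl|HlL].
  - specialize (HL l HLl). fold e in HL.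
    assert (Rabs e * rho k j x m <= d * wl l * rho k j x m) by (apply Rmult_le_compat_r; lra).
    lra.
  - assert (HE : Rabs e <= E).
    { unfold E, e. apply (sum_f_bound (fun l => Rabs (p l - p0 * wl l))).
      intros; apply Rabs_pos. lia. }
    assert (HQ1 : INR (m + j) <= Q).
    { unfold Q. apply Rle_trans with (INR L). apply le_INR; unfold l in HlL; lia.
      pose proof (pos_INR j); lra. }
    assert (HQ0 : 1 <= Q) by (pose proof (pos_INR L); unfold Q; lra).
    assert (Hr : rho k j x m <= Q ^ j / x ^ 2).
    { apply Rle_trans with (falling (INR (m + j)) j / x ^ 2).
      apply rho_ub; auto.
      unfold Rdiv. apply Rmult_le_compat_r.
      apply Rlt_le, Rinv_0_lt_compat, pow_lt; lra.
      apply Rle_trans with (INR (m + j) ^ j). apply falling_nat_bd.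
      apply pow_incr. split; [apply pos_INR|auto]. }
    assert (Hw2 : / Q ^ 2 <= wl l).
    { assert (HlL' : INR l + 1 <= INR L) by (rewrite <- S_INR; apply le_INR; lia).
      pose proof (pos_INR j).
      unfold wl. rewrite S_INR. apply Rinv_le_contravar.
      apply Rmult_lt_0_compat; lra.
      replace (Q ^ 2) with (Q * Q) by ring. apply Rmult_le_compat; unfold Q; lra. }
    assert (HEpos : 0 <= E) by (pose proof (Rabs_pos e); lra).
    assert (HQj : 0 < Q ^ j) by (apply pow_lt; lra).
    assert (HQ2 : 0 < Q ^ 2) by (apply pow_lt; lra).
    assert (HX' : E * (Q ^ j * Q ^ 2) <= d * x).
    { rewrite <- pow_add. apply Rmult_le_reg_r with (/ d). apply Rinv_0_lt_compat; lra.
      replace (d * x * / d) with x by (field; lra). exact HX. }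
    assert (H1 : Rabs e * rho k j x m <= E * (Q ^ j / x ^ 2)).
    { apply Rmult_le_compat; try lra. apply Rabs_pos. }
    assert (H2 : E * (Q ^ j / x ^ 2) <= d / x * / Q ^ 2).
    { assert (Hx2 : 0 < x ^ 2) by (apply pow_lt; lra).
      apply Rmult_le_reg_r with (x ^ 2 * Q ^ 2). apply Rmult_lt_0_compat; lra.
      replace (E * (Q ^ j / x ^ 2) * (x ^ 2 * Q ^ 2)) with (E * (Q ^ j * Q ^ 2)) by (field; lra).
      replace (d / x * / Q ^ 2 * (x ^ 2 * Q ^ 2)) with (d * x) by (simpl; field; lra).
      exact HX'. }
    assert (H3 : d / x * / Q ^ 2 <= d / x * wl l).
    { apply Rmult_le_compat_l; [apply Rlt_le, Rdiv_lt_0_compat; lra | exact Hw2]. }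
    assert (0 <= d * (wl l * rho k j x m)) by (apply Rmult_le_pos; [lra|apply Rmult_le_pos; lra]).
    lra.
Qed.

Theorem lemma8 (b p0 : R) (p : nat -> R) (k j : nat) (c0 : R) :
  0 < b -> 0 < p0 ->
  (forall l : nat, (1 <= l)%nat -> 0 <= p l) ->
  is_series (fun m => p (S m)) 1 ->
  is_lim_seq (fun l => p l * INR l ^ 2) p0 ->
  (2 <= j)%nat -> (j <= k)%nat ->
  0 < c0 ->
  forall eps : R, 0 < eps ->
    exists K0 : R, 1 < K0 /\
      forall K n : R, K0 < K -> c0 / 2 <= n ->
        Rabs (RjKn b p k j K n - Rj_lim b p0 k j) < eps.
Proof.
  intros Hb Hp0 _ _ Hlim Hj Hjk Hc0 eps Heps.
  set (Bc := cc (j - 2) k).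
  assert (HB1 : 0 < 2 * b * (Rabs Bc + 1)) by (pose proof (Rabs_pos Bc); apply Rmult_lt_0_compat; lra).
  set (d := eps / (2 * b * (Rabs Bc + 1))).
  assert (Hd : 0 < d) by (apply Rdiv_lt_0_compat; lra).
  destruct (e_decay p p0 d Hp0 Hd Hlim) as [L [HL1 HL]].
  set (E := sum_f_R0 (fun l => Rabs (p l - p0 * wl l)) L).
  set (Q := INR L + INR j).
  set (X := Rmax (INR k + 1) (E * Q ^ (j + 2) / d)).
  assert (Hk := pos_INR k).
  assert (HX1 : INR k + 1 <= X) by apply Rmax_l.
  assert (HX2 : E * Q ^ (j + 2) / d <= X) by apply Rmax_r.
  assert (He1 : 2 < exp 1) by (pose proof (exp_ineq1 1 ltac:(lra)); lra).
  exists (Rmax (exp 1) (2 * X / c0) + 1). split.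
  { pose proof (Rmax_l (exp 1) (2 * X / c0)). lra. }
  intros K n HK Hn.
  pose proof (Rmax_l (exp 1) (2 * X / c0)) as HK1.
  pose proof (Rmax_r (exp 1) (2 * X / c0)) as HK2.
  assert (HlnK : 1 < ln K).
  { rewrite <- (ln_exp 1). apply ln_increasing; lra. }
  set (x := K * ln K * n).
  assert (Hx : X < x).
  { assert (H1 : K <= K * ln K) by (rewrite <- (Rmult_1_r K) at 1; apply Rmult_le_compat_l; lra).
    assert (H2 : K * (c0 / 2) <= K * ln K * n) by (apply Rmult_le_compat; lra).
    assert (H3 : X < K * (c0 / 2)).
    { apply Rmult_lt_reg_r with (2 / c0). apply Rdiv_lt_0_compat; lra.
      replace (K * (c0 / 2) * (2 / c0)) with K by (field; lra).
      replace (X * (2 / c0)) with (2 * X / c0) by (field; lra). lra. }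
    unfold x; lra. }
  assert (HxX1 : INR k + 1 <= x) by lra.
  assert (HxX2 : E * Q ^ (j + 2) / d <= x) by lra.
  assert (Hx0 : 0 < x) by lra.
  assert (HjR : 2 <= INR j) by (apply (le_INR 2); lia).
  pose proof (omega_rho_sum k j x Hj Hjk HxX1) as Hwr.
  pose proof (omega_sum j Hj) as Hw.
  pose proof (main_bound b p0 p k j x d L Hj Hjk Hd HL HxX1 HxX2) as Hbd.
  set (ea := fun m : nat => (p (j - 1 + m)%nat - p0 * wl (j - 1 + m)%nat) * rho k j x m).
  set (h := fun m : nat => d * (wl (j - 1 + m)%nat * rho k j x m) + d / x * wl (j - 1 + m)%nat).
  assert (Hh : is_series h (d * (Bc / x) + d / x * / (INR j - 1))).
  { exact (is_series_plus _ _ _ _ (is_series_scal_l d _ _ Hwr) (is_series_scal_l (d / x) _ _ Hw)). }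
  assert (Hexh : ex_series h) by (eexists; exact Hh).
  assert (Hexabs : ex_series (fun m => Rabs (ea m))).
  { apply (ex_series_le (K := R_AbsRing) (V := R_CompleteNormedModule) _ h); [|exact Hexh]. intros m. change (norm (Rabs (ea m))) with (Rabs (Rabs (ea m))).
    rewrite Rabs_Rabsolu. apply Hbd. }
  assert (Hexe : ex_series ea) by (apply ex_series_Rabs; exact Hexabs).
  assert (HSe : Rabs (Series ea) <= d * (Bc / x) + d / x * / (INR j - 1)).
  { apply Rle_trans with (Series (fun m => Rabs (ea m))). apply Series_Rabs; exact Hexabs.
    rewrite <- (is_series_unique _ _ Hh). apply Series_le; [|exact Hexh].
    intros m; split; [apply Rabs_pos|apply Hbd]. }
  assert (Hexwr : ex_series (fun m => p0 * (wl (j - 1 + m)%nat * rho k j x m))).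
  { eexists. exact (is_series_scal_l p0 _ _ Hwr). }
  assert (HR : RjKn b p k j K n = x * b * (p0 * (Bc / x) + Series ea)).
  { unfold RjKn. fold x. f_equal.
    replace (Bc / x) with (Series (fun m => wl (j - 1 + m)%nat * rho k j x m)) by (apply is_series_unique; exact Hwr).
    rewrite <- Series_scal_l, <- Series_plus by auto.
    apply Series_ext. intros m. unfold ea, Rj_term, rho. fold x. unfold Rdiv. ring. }
  rewrite HR, Rj_lim_val by auto. fold Bc.
  replace (x * b * (p0 * (Bc / x) + Series ea) - b * p0 * Bc) with (x * b * Series ea) by (field; lra).
  rewrite Rabs_mult, (Rabs_right (x * b)) by (apply Rle_ge, Rmult_le_pos; lra).
  apply Rle_lt_trans with (x * b * (d * (Bc / x) + d / x * / (INR j - 1))).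
  { apply Rmult_le_compat_l; [apply Rmult_le_pos; lra|exact HSe]. }
  replace (x * b * (d * (Bc / x) + d / x * / (INR j - 1))) with (b * d * (Bc + / (INR j - 1))) by (field; lra).
  assert (Hinv : / (INR j - 1) <= 1).
  { rewrite <- Rinv_1. apply Rinv_le_contravar; lra. }
  assert (HBc := Rle_abs Bc).
  apply Rle_lt_trans with (b * d * (Rabs Bc + 1)).
  { apply Rmult_le_compat_l; [apply Rmult_le_pos; lra|lra]. }
  unfold d. replace (b * (eps / (2 * b * (Rabs Bc + 1))) * (Rabs Bc + 1)) with (eps / 2).
  lra. field. pose proof (Rabs_pos Bc). lra.
Qed.
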